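(* For every real $\alpha$ with $0\le\alpha<8$, all Fourier coefficients of $E_2^{(4)}(\tau)-\alpha\Delta_2^{(4)}(\tau)$ (i.e. the coefficients of $q^n$ for all $n\ge0$) are positive.
   Context: $q=e^{2\pi i\tau}$, $\tau\in\mathfrak H$. $E_2(\tau)=1-24\sum_{n\ge1}\sigma(n)q^n$ with $\sigma(n)=\sum_{d\mid n}d$; $E_2^{(4)}(\tau)=\frac13(4E_2(4\tau)-E_2(\tau))$; $\Delta_2^{(4)}(\tau)=\eta(4\tau)^8/\eta(2\tau)^4=\sum_{n\ge1,\ n\text{ odd}}\sigma(n)q^n$, where $\eta(\tau)=q^{1/24}\prod_{n\ge1}(1-q^n)$. *)

(* Defs.v *)
(* q-expansions are represented by their coefficient
   sequences (nat -> R): coefficient of q^n. *)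
From mathcomp Require Import all_boot all_order all_algebra.
Set Implicit Arguments. Unset Strict Implicit. Unset Printing Implicit Defensive.
Import Order.TTheory GRing.Theory Num.Theory.
Local Open Scope ring_scope.

Definition sigma (n : nat) : nat := (\sum_(d <- divisors n) d)%N.

(* coefficients of E_2(tau) = 1 - 24 sum_{n>=1} sigma(n) q^n *)
Definition E2_coef (R : ringType) (n : nat) : R :=
  if n == 0%N then 1 else - (24%:R * (sigma n)%:R).

(* coefficients of E_2(4 tau): substitute q -> q^4 *)
Definition E2_at4_coef (R : ringType) (n : nat) : R :=
  if (4 %| n)%N then E2_coef R (n %/ 4) else 0.

Definition E24_coef (R : fieldType) (n : nat) : R :=
  (4%:R * E2_at4_coef R n - E2_coef R n) / 3%:R.

Definition Delta24_coef (R : ringType) (n : nat) : R :=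
  if odd n then (sigma n)%:R else 0.

(* Main.v *)
Require Import Defs.
From mathcomp Require Import all_boot all_order all_algebra.
From mathcomp Require Import lra.
Import Order.TTheory GRing.Theory Num.Theory.
Local Open Scope ring_scope.

Lemma sum_sub (s s' : seq nat) : uniq s -> uniq s' -> {subset s <= s'} ->
  (\sum_(i <- s) i <= \sum_(i <- s') i)%N.
Proof. by move=> u u' ss; apply: (@uniq_sub_le_big nat addn leq leqnn (fun x y => leq_addr y x) 0%N nat s s' xpredT id). Qed.

Lemma sigma_pos n : (0 < n)%N -> (1 <= sigma n)%N.
Proof.
move=> n0; rewrite /sigma.
have := sum_sub [:: 1%N] (divisors n) isT (divisors_uniq n).
rewrite big_seq1; apply => x; rewrite inE => /eqP ->; exact: divisor1.
Qed.

Lemma sigma4 m : (0 < m)%N -> (4 * sigma m < sigma (4 * m))%N.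
Proof.
move=> m0; rewrite /sigma.
have H := sum_sub (1%N :: map (muln 4) (divisors m)) (divisors (4 * m)).
rewrite big_cons big_map -big_distrr /= in H.
apply: H; last first.
- move=> x; rewrite inE => /orP [/eqP -> | /mapP [d Hd ->]]; first exact: divisor1.
  rewrite -dvdn_divisors ?muln_gt0 // dvdn_pmul2l //.
  by rewrite dvdn_divisors.
- exact: divisors_uniq.
- rewrite /= map_inj_uniq ?divisors_uniq ?andbT; last by move=> a b /eqP; rewrite eqn_mul2l => /eqP.
  apply/mapP => [[d _ /eqP]]; rewrite eq_sym; case: d => [|d] //; rewrite mulnS.
  by case: (4 * d)%N.
Qed.

Theorem mainTheorem7 (R : realFieldType) (alpha : R) :
  0 <= alpha -> alpha < 8%:R ->
  forall n : nat, 0 < E24_coef R n - alpha * Delta24_coef R n.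
Proof.
move=> a0 a8 [|n].
  rewrite /E24_coef /Delta24_coef /E2_at4_coef /E2_coef /= mulr0 subr0 mulr1; apply: divr_gt0; lra.
set N := n.+1.
have N0 : (0 < N)%N by [].
have s1 := sigma_pos N N0.
rewrite /E24_coef /Delta24_coef /E2_at4_coef /E2_coef -/N.
have E1 : (N == 0%N) = false by [].
rewrite ?E1.
case: (boolP (4 %| N)%N) => H4.
- have oN : odd N = false.
    by rewrite -(divnK H4) oddM andbF.
  rewrite oN mulr0 subr0.
  set m := (N %/ 4)%N.
  have Nm : N = (4 * m)%N by rewrite /m mulnC divnK.
  have m0 : (0 < m)%N by move: N0; rewrite Nm muln_gt0 => /andP[].
  rewrite ifN ?eqn0Ngt ?m0 //.
  have h := sigma4 m m0; rewrite -Nm in h.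
  have hR : (4 * sigma m).+1%:R <= (sigma N)%:R :> R by rewrite ler_nat.
  rewrite -addn1 natrD natrM in hR.
  apply: divr_gt0; last by rewrite ltr0n.
  rewrite mulrN opprK; nra.
- rewrite mulr0 sub0r opprK.
  have sR : 1 <= (sigma N)%:R :> R by rewrite ler1n.
  case: (odd N).
  + have -> : 24%:R * (sigma N)%:R / 3%:R = 8%:R * (sigma N)%:R :> R.
      rewrite mulrAC; congr (_ * _).
      by rewrite -[24%N]/(8 * 3)%N natrM mulfK // pnatr_eq0.
    nra.
  + rewrite mulr0 subr0; apply: divr_gt0; last by rewrite ltr0n.
    nra.
Qed.
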